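(* Let $\mathscr C$ be a universally separable concept class on a measurable space $\Omega$ and $d\in\mathbb N$. The following are equivalent: (1) $\mathrm{VC}(\mathscr C\,\mathrm{mod}\,\omega_1)\le d$; (2) there is a countable set $N\subseteq\Omega$ such that $\mathrm{VC}(\mathscr C\restriction(\Omega\setminus N))\le d$.
   Context: $\mathscr C$ is universally separable if there is a countable $\mathscr C'\subseteq\mathscr C$ such that every $C\in\mathscr C$ is the pointwise limit of indicator functions of a sequence from $\mathscr C'$. $\mathrm{VC}(\mathscr C\restriction X)$ is the VC dimension of $\{C\cap X:C\in\mathscr C\}$. $\mathrm{VC}(\mathscr C\,\mathrm{mod}\,\omega_1)$ is the supremum of $n$ for which there exist uncountable sets $A_1,\dots,A_n\subseteq\Omega$ such that for every $J\subseteq\{1,\dots,n\}$ some $C\in\mathscr C$ contains $A_i$ for all $i\in J$ and is disjoint from $A_j$ for all $j\notin J$. *)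

(* Defs.v *)
From Stdlib Require Import List Arith Classical.
Import ListNotations.

Definition set (T : Type) := T -> Prop.

Definition is_sigma_algebra {Omega : Type} (Sigma : set (set Omega)) : Prop :=
  Sigma (fun _ => True) /\
  (forall A, Sigma A -> Sigma (fun x => ~ A x)) /\
  (forall A : nat -> set Omega, (forall n, Sigma (A n)) ->
     Sigma (fun x => exists n, A n x)).

Definition countable {T : Type} (P : set T) : Prop :=
  exists f : T -> nat, forall x y, P x -> P y -> f x = f y -> x = y.

Definition uncountable {T : Type} (P : set T) : Prop := ~ countable P.

Definition universally_separable {Omega : Type} (Cl : set (set Omega)) : Prop :=
  exists Cl' : set (set Omega),
    (forall C, Cl' C -> Cl C) /\ countable Cl' /\
    forall C, Cl C -> exists s : nat -> set Omega,
      (forall n, Cl' (s n)) /\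
      forall x, exists n0, forall n, n0 <= n -> (s n x <-> C x).

Definition shatters_in {Omega : Type} (Cl : set (set Omega)) (X : set Omega)
  (A : list Omega) : Prop :=
  NoDup A /\ (forall a, In a A -> X a) /\
  forall J : set Omega, exists C, Cl C /\ forall a, In a A -> (C a <-> J a).

Definition VC_restr_le {Omega : Type} (Cl : set (set Omega)) (X : set Omega)
  (d : nat) : Prop :=
  forall A : list Omega, shatters_in Cl X A -> length A <= d.

Definition shatters_mod_omega1 {Omega : Type} (Cl : set (set Omega))
  (n : nat) (A : nat -> set Omega) : Prop :=
  (forall i, i < n -> uncountable (A i)) /\
  forall J : set nat, exists C, Cl C /\
    forall i, i < n ->
      (J i -> forall x, A i x -> C x) /\
      (~ J i -> forall x, A i x -> ~ C x).

Definition VC_mod_omega1_le {Omega : Type} (Cl : set (set Omega)) (d : nat) : Prop :=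
  forall n (A : nat -> set Omega), shatters_mod_omega1 Cl n A -> n <= d.

(* Main.v *)
Require Import Defs.
From Stdlib Require Import List Arith Lia Classical ClassicalEpsilon Cantor.
Import ListNotations.
Lemma pair_inj a b c d : Cantor.to_nat (a,b) = Cantor.to_nat (c,d) -> a = c /\ b = d.
Proof. intro H. apply (f_equal Cantor.of_nat) in H. rewrite !Cantor.cancel_of_to in H.
  inversion H; auto. Qed.

Fixpoint lcode (l : list nat) : nat :=
  match l with [] => 0 | h :: t => S (Cantor.to_nat (h, lcode t)) end.

Lemma lcode_inj : forall l l', lcode l = lcode l' -> l = l'.
Proof. induction l; destruct l'; simpl; intros H; try discriminate; auto.
  injection H as H. apply pair_inj in H. destruct H; subst. f_equal; auto. Qed.

Lemma countable_sub {T} (P Q : set T) : countable Q -> (forall x, P x -> Q x) -> countable P.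
Proof. intros [f Hf] H. exists f. intros; apply Hf; auto. Qed.

Lemma countable_union {I T : Type} (g : I -> nat) (Hg : forall i j, g i = g j -> i = j)
  (P : I -> set T) : (forall i, countable (P i)) -> countable (fun y => exists i, P i y).
Proof.
  intros HP.
  pose (fi := fun i => proj1_sig (constructive_indefinite_description _ (HP i))).
  assert (Hfi : forall i x y, P i x -> P i y -> fi i x = fi i y -> x = y).
  { intro i. unfold fi. destruct (constructive_indefinite_description _ (HP i)); simpl; auto. }
  assert (Hch : forall y, {i | P i y} + {~ exists i, P i y}).
  { intro y. destruct (excluded_middle_informative (exists i, P i y)) as [h|h].
    - left. exact (constructive_indefinite_description _ h).
    - right; exact h. }
  exists (fun y => match Hch y with inleft s => Cantor.to_nat (g (proj1_sig s), fi (proj1_sig s) y) | inright _ => 0 end).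
  intros x y Hx Hy E.
  destruct (Hch x) as [[i Hi]|n]; [| exfalso; auto].
  destruct (Hch y) as [[j Hj]|n]; [| exfalso; auto].
  simpl in E. apply pair_inj in E. destruct E as [E1 E2]. apply Hg in E1. subst j.
  eapply Hfi; eauto.
Qed.

Lemma countable_add_list {T} (N : set T) (l : list T) : countable N ->
  countable (fun y => N y \/ In y l).
Proof.
  intro HN.
  apply countable_sub with (Q := fun y => exists o : option nat,
     match o with None => N y | Some j => nth_error l j = Some y end).
  - apply (countable_union (fun o => match o with None => 0 | Some j => S j end)).
    + intros [i|] [j|]; simpl; intros H; try discriminate; auto.
    + intros [j|]; auto. exists (fun _ => 0). intros x y Hx Hy _. congruence.
  - intros y [H|H]. exists None; auto. apply In_nth_error in H. destruct H as [j Hj].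
    exists (Some j); auto.
Qed.
Lemma uncount_nonempty {T} (P : set T) : uncountable P -> exists x, P x.
Proof. intro H. apply NNPP. intro H'. apply H. exists (fun _ => 0). intros x y Hx. exfalso; eauto. Qed.

Lemma dir21 {Omega} (Cl : set (set Omega)) d (N : set Omega) :
  countable N -> VC_restr_le Cl (fun x => ~ N x) d -> VC_mod_omega1_le Cl d.
Proof.
  intros HN HVC n A [Hu Hs].
  assert (Hb : forall m, m <= n -> exists l, length l = m /\ NoDup l /\
     (forall a, In a l -> ~ N a) /\ forall i a, nth_error l i = Some a -> A i a).
  { induction m; intros Hm.
    - exists []. split; [reflexivity|split;[constructor|split]].
      + intros a [].
      + intros i a H; destruct i; discriminate.
    - destruct IHm as [l [Hl [Hnd [HnN HA]]]]; [lia|].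
      assert (exists a, A m a /\ ~ (N a \/ In a l)) as [a [Ha Hna]].
      { apply NNPP; intro H. apply (Hu m); [lia|].
        apply countable_sub with (Q := fun y => N y \/ In y l).
        apply countable_add_list; auto.
        intros x Hx. apply NNPP; intro. apply H. eauto. }
      exists (l ++ [a]). repeat split.
      + rewrite length_app; simpl; lia.
      + apply NoDup_app; auto. constructor; auto; constructor.
        intros x Hx [<-|[]]. apply Hna; auto.
      + intros x Hx. apply in_app_or in Hx. destruct Hx as [Hx|[<-|[]]]; auto.
      + intros i b Hi. destruct (Nat.lt_ge_cases i (length l)).
        * rewrite nth_error_app1 in Hi; auto.
        * rewrite nth_error_app2 in Hi; auto.
          destruct (i - length l) eqn:E; simpl in Hi.
          -- inversion Hi; subst b. replace i with m by lia. auto.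
          -- destruct n0; discriminate. }
  destruct (Hb n (le_n n)) as [l [Hl [Hnd [HnN HA]]]].
  rewrite <- Hl. apply HVC. split; [auto|split; [auto|]].
  intro J.
  destruct (Hs (fun i => exists a, nth_error l i = Some a /\ J a)) as [C [HC HCs]].
  exists C. split; auto. intros a Ha.
  apply In_nth_error in Ha. destruct Ha as [i Hi].
  assert (Hin : i < n) by (rewrite <- Hl; apply nth_error_Some; congruence).
  destruct (HCs i Hin) as [H1 H2]. split.
  - intro Ca. apply NNPP; intro nJ. apply (H2 ltac:(intros [b [Hb' Jb]]; rewrite Hi in Hb'; inversion Hb'; subst; auto) a (HA _ _ Hi)); auto.
  - intro Ja. apply (H1 ltac:(eauto) a (HA _ _ Hi)).
Qed.
Lemma bits : forall d (J : nat -> Prop), exists k, k < 2 ^ (S d) /\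
  forall i, i <= d -> (Nat.testbit k i = true <-> J i).
Proof.
  induction d; intros J.
  - destruct (classic (J 0)) as [H|H].
    + exists 1. split; [simpl; lia|]. intros i Hi. replace i with 0 by lia. simpl; tauto.
    + exists 0. split; [simpl; lia|]. intros i Hi. replace i with 0 by lia. simpl. split; intro; [discriminate|tauto].
  - destruct (IHd (fun i => J (S i))) as [k [Hk HJ]].
    destruct (classic (J 0)) as [H|H].
    + exists (2*k+1). split. rewrite Nat.pow_succ_r'. lia.
      intros [|i] Hi. rewrite Nat.testbit_odd_0; tauto.
      rewrite Nat.testbit_odd_succ by lia. apply HJ; lia.
    + exists (2*k). split. rewrite Nat.pow_succ_r'. lia.
      intros [|i] Hi. rewrite Nat.testbit_even_0. split; intro; [discriminate|tauto].
      rewrite Nat.testbit_even_succ by lia. apply HJ; lia.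
Qed.

Lemma unif {Omega} (s : nat -> set Omega) (C : set Omega) (x : nat -> Omega) :
  (forall y, exists n0, forall n, n0 <= n -> (s n y <-> C y)) ->
  forall d, exists n0, forall i, i <= d -> forall n, n0 <= n -> (s n (x i) <-> C (x i)).
Proof.
  intros H d. induction d.
  - destruct (H (x 0)) as [n0 Hn]. exists n0. intros i Hi. replace i with 0 by lia. auto.
  - destruct IHd as [n1 H1]. destruct (H (x (S d))) as [n2 H2].
    exists (max n1 n2). intros i Hi n Hn. destruct (Nat.eq_dec i (S d)).
    + subst. apply H2; lia.
    + apply H1; lia.
Qed.

Lemma dir12 {Omega} (Cl : set (set Omega)) d :
  universally_separable Cl -> VC_mod_omega1_le Cl d ->
  exists N : set Omega, countable N /\ VC_restr_le Cl (fun x => ~ N x) d.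
Proof.
  intros [Cl' [HCl' [[f Hf] Happ]]] HVC.
  pose (realizes := fun (L : list nat) (x : nat -> Omega) =>
    forall k, k < 2 ^ (S d) -> exists C, Cl' C /\ f C = nth k L 0 /\
      forall i, i <= d -> (C (x i) <-> Nat.testbit k i = true)).
  pose (Aset := fun L i y => exists x, realizes L x /\ x i = y).
  assert (Hc : forall L, exists i, i <= d /\ countable (Aset L i)).
  { intro L. apply NNPP. intro Hn.
    assert (HS : shatters_mod_omega1 Cl (S d) (Aset L)).
    { split.
      - intros i Hi Hco. apply Hn. exists i. split; auto; lia.
      - intro J. destruct (bits d J) as [k [Hk HJ]].
        assert (Hne : exists x, realizes L x).
        { assert (uncountable (Aset L 0)) as Hu0.
          { intro Hco. apply Hn. exists 0. split; auto; lia. }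
          destruct (uncount_nonempty _ Hu0) as [y [x [Hx _]]]. eauto. }
        destruct Hne as [x Hx]. destruct (Hx k Hk) as [C [HC [HfC HCx]]].
        exists C. split; [auto|]. intros i Hi.
        assert (Hgen : forall y, Aset L i y -> (C y <-> J i)).
        { intros y [x' [Hx' <-]]. destruct (Hx' k Hk) as [C' [HC' [HfC' HC'x]]].
          assert (C' = C) by (apply Hf; auto; congruence). subst C'.
          rewrite HC'x by lia. apply HJ; lia. }
        split; intros HJi y Hy; specialize (Hgen y Hy); tauto. }
    specialize (HVC _ _ HS). lia. }
  destruct (choice _ Hc) as [iL HiL].
  exists (fun y => exists L, Aset L (iL L) y). split.
  - apply (countable_union lcode lcode_inj). intro L. apply HiL.
  - intros A [Hnd [HX Hsh]]. apply NNPP; intro Hlen.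
    destruct A as [|a0 A']; [simpl in Hlen; lia|].
    set (A := a0 :: A') in *.
    pose (x := fun i => nth i A a0).
    assert (Hk : forall k, exists C, Cl' C /\ forall i, i <= d -> (C (x i) <-> Nat.testbit k i = true)).
    { intro k.
      destruct (Hsh (fun a => exists i, i <= d /\ x i = a /\ Nat.testbit k i = true)) as [C [HC HCs]].
      destruct (Happ C HC) as [s [Hs Hsc]].
      destruct (unif s C x Hsc d) as [n0 Hn0].
      exists (s n0). split; auto. intros i Hi. rewrite (Hn0 i Hi n0 (le_n _)).
      rewrite HCs by (apply nth_In; lia). split.
      - intros [j [Hj [Hxj Hb]]]. unfold x in Hxj.
        apply (proj1 (NoDup_nth A a0) Hnd) in Hxj; try lia. subst; auto.
      - intro Hb. exists i; auto. }
    destruct (choice _ Hk) as [Ck HCk].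
    pose (L := map (fun k => f (Ck k)) (seq 0 (2 ^ (S d)))).
    assert (HR : realizes L x).
    { intros k Hkk. exists (Ck k). split; [apply HCk|split; [|apply HCk]].
      unfold L. rewrite nth_indep with (d' := (fun k => f (Ck k)) 0) by (rewrite length_map, length_seq; auto).
      rewrite (map_nth (fun k => f (Ck k)) (seq 0 (2 ^ S d)) 0 k), seq_nth; auto. }
    destruct (HiL L) as [Hi _].
    apply (HX (x (iL L))). apply nth_In; lia.
    exists L, x; auto.
Qed.

Theorem mainTheorem13 (Omega : Type) (Sigma : set (set Omega))
  (HSigma : is_sigma_algebra Sigma)
  (Cl : set (set Omega)) (Hmeas : forall C, Cl C -> Sigma C)
  (Hsep : universally_separable Cl) (d : nat) :
  VC_mod_omega1_le Cl d <->
  exists N : set Omega, countable N /\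
    VC_restr_le Cl (fun x => ~ N x) d.
Proof.
  split.
  - intro H. apply dir12; auto.
  - intros [N [HN HV]]. eapply dir21; eauto.
Qed.
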